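(* Let $d\ge1$, $n\ge d+2$, and let $T$ be a $d$-hypertree in $K_n^d$. Then the facet graph $G_d(T)$ is $d$-connected.
   Context: Fix a field $\mathbb F$. A $d$-simplex is a $(d+1)$-element subset of $[n]$ oriented by increasing order; $K_n^d$ is the complex of all subsets of $[n]$ of size at most $d+1$. A $d$-chain is a formal $\mathbb F$-combination of $d$-simplices with boundary $\partial\{s_1<\dots<s_{d+1}\}=\sum_i(-1)^{i-1}(\sigma\setminus\{s_i\})$ extended linearly; a $d$-cycle is a chain with $\partial Z=0$. A set of $d$-simplices is acyclic if it supports no nonzero $d$-cycle; a $d$-hypertree is a maximal acyclic set of $d$-simplices of $K_n^d$. The facet graph $G_d(T)$ has vertex set $T$, two $d$-simplices adjacent iff they share a $(d-1)$-face. A graph is $k$-connected if deleting any set of fewer than $k$ of its vertices leaves a nonempty connected graph. *)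

(* Defs.v *)
From HB Require Import structures.
From mathcomp Require Import all_boot all_order all_algebra.

Import GRing.Theory.
Local Open Scope ring_scope.

(* A d-simplex on vertex set [n] = 'I_n is a (d+1)-element subset of 'I_n,
   oriented by the increasing order of 'I_n. *)
Definition is_simplex (n d : nat) (s : {set 'I_n}) : bool := #|s| == d.+1.

(* Sign of the face s :\ v in the boundary of s: (-1)^(i-1) where v = s_i,
   i.e. (-1)^(number of elements of s smaller than v). *)
Definition face_sign (F : fieldType) (n : nat) (s : {set 'I_n}) (v : 'I_n) : F :=
  (-1) ^+ #|[set x in s | (val x < val v)%N]|.

(* Boundary of a d-chain c (a formal F-combination of d-simplices, represented
   by its coefficient function; only coefficients on d-simplices matter),
   evaluated at the (d-1)-simplex t. *)
Definition boundary (F : fieldType) (n d : nat) (c : {ffun {set 'I_n} -> F})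
  (t : {set 'I_n}) : F :=
  \sum_(s : {set 'I_n} | is_simplex n d s)
     \sum_(v in s | s :\ v == t) face_sign F n s v * c s.

Definition acyclic (F : fieldType) (n d : nat) (T : {set {set 'I_n}}) : Prop :=
  forall c : {ffun {set 'I_n} -> F},
    (forall s, s \notin T -> c s = 0) ->
    (forall t, boundary F n d c t = 0) ->
    forall s, c s = 0.

Definition hypertree (F : fieldType) (n d : nat) (T : {set {set 'I_n}}) : Prop :=
  [/\ (forall s, s \in T -> is_simplex n d s),
      acyclic F n d T &
      (forall s, is_simplex n d s -> s \notin T -> ~ acyclic F n d (s |: T))].

Definition facet_adj (n d : nat) (s t : {set 'I_n}) : bool :=
  (s != t) && [exists r : {set 'I_n}, [&& #|r| == d, r \subset s & r \subset t]].

Definition connected_on (T : finType) (e : rel T) (V : {set T}) : Prop :=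
  V != set0 /\
  forall x y, x \in V -> y \in V ->
    connect (fun a b => [&& a \in V, b \in V & e a b]) x y.

Definition k_connected (T : finType) (e : rel T) (V : {set T}) (k : nat) : Prop :=
  forall S : {set T}, S \subset V -> (#|S| < k)%N -> connected_on T e (V :\: S).

(* Main.v *)
Require Import Defs.
From HB Require Import structures.
From mathcomp Require Import all_boot all_order all_algebra.
From Stdlib Require Import Classical_Prop.
From mathcomp Require Import ring zify.

Set Implicit Arguments.
Unset Strict Implicit.
Unset Printing Implicit Defensive.

Import GRing.Theory.
Local Open Scope ring_scope.

Section Proofs.
Variable F : fieldType.
Variable n : nat.

Local Notation fs := (face_sign F n).
Local Notation bnd := (boundary F n).
Local Notation chain := {ffun {set 'I_n} -> F}.

Lemma fs_sq s v : fs s v * fs s v = 1.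
Proof. by rewrite /face_sign -exprD addnn -mul2n exprM sqrrN expr1n expr1n. Qed.

Lemma fs_neq0 s v : fs s v != 0.
Proof. by rewrite /face_sign signr_eq0. Qed.

Lemma card_lt_ins (s : {set 'I_n}) (y v : 'I_n) : y \notin s ->
  #|[set x in y |: s | (val x < val v)%N]| =
  (#|[set x in s | (val x < val v)%N]| + (val y < val v)%N)%N.
Proof.
move=> ys; case P: (val y < val v)%N.
- have -> : [set x in y |: s | (val x < val v)%N] =
            y |: [set x in s | (val x < val v)%N].
    by apply/setP=> z; rewrite !inE; case: (z =P y) => [->|]; rewrite ?P.
  by rewrite cardsU1 inE (negbTE ys) addnC.
- have -> : [set x in y |: s | (val x < val v)%N] = [set x in s | (val x < val v)%N].
    by apply/setP=> z; rewrite !inE; case: (z =P y) => [->|]; rewrite ?P ?andbF.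
  by rewrite addn0.
Qed.

Lemma fs_ins (s : {set 'I_n}) (y v : 'I_n) : y \notin s ->
  fs (y |: s) v = fs s v * (if (val y < val v)%N then -1 else 1).
Proof.
move=> ys; rewrite /face_sign card_lt_ins // exprD.
by case: (val y < val v)%N; rewrite ?expr1 ?expr0.
Qed.

Lemma fs_dd (t : {set 'I_n}) (x v : 'I_n) : x != v -> x \notin t -> v \notin t ->
  fs (v |: t) v * fs (x |: (v |: t)) x = - (fs (v |: (x |: t)) v * fs (x |: t) x).
Proof.
move=> xv xt vt.
have xvt : x \notin v |: t by rewrite !inE negb_or xv.
have vxt : v \notin x |: t by rewrite !inE negb_or eq_sym xv.
rewrite (fs_ins _ xvt) (fs_ins _ vxt) !fs_ins // !ltnn.
have : val x != val v by [].
case: (ltngtP (val v) (val x)) => // _ _; rewrite !mulr1 ?mulrN1 ?mulNr ?mulrN ?opprK;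
  by rewrite mulrC.
Qed.

Lemma bnd_bd k (c : chain) (t : {set 'I_n}) : #|t| = k ->
  bnd k c t = \sum_(v | v \notin t) fs (v |: t) v * c (v |: t).
Proof.
move=> tk; rewrite /boundary.
under eq_bigr do rewrite big_mkcond.
rewrite exchange_big /= [RHS]big_mkcond; apply: eq_bigr => v _.
case: (boolP (v \in t)) => vt /=.
- apply: big1 => s _; case: ifP => // /andP[vs /eqP st]; by move: vt; rewrite -st setD11.
- rewrite (bigD1 (v |: t)) /=; last by rewrite /is_simplex cardsU1 vt tk.
  rewrite setU11 setU1K // eqxx /= big1 ?addr0 // => s /andP[_ ns].
  case: ifP => // /andP[vs /eqP st]; move: ns; by rewrite -st setD1K ?eqxx.
Qed.

Lemma bnd_size k (c : chain) (t : {set 'I_n}) : #|t| != k -> bnd k c t = 0.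
Proof.
move=> tk; rewrite /boundary; apply: big1 => s /eqP sk; apply: big1 => v /andP[vs /eqP st].
by move: tk; rewrite -st; have := cardsD1 v s; rewrite vs sk add1n => -[->]; rewrite eqxx.
Qed.

Definition ind (r : {set 'I_n}) : chain := [ffun s => (s == r)%:R].

Definition span k (V : {set 'I_n}) (T : {set {set 'I_n}}) : Prop :=
  forall r : {set 'I_n}, r \subset V -> #|r| = k.+1 ->
  exists c : chain, (forall s, s \notin T -> c s = 0) /\
                    (forall t, bnd k c t = bnd k (ind r) t).

Definition simps k (V : {set 'I_n}) (T : {set {set 'I_n}}) : Prop :=
  forall s, s \in T -> s \subset V /\ #|s| = k.+1.


Lemma hyper_span d T : hypertree F n d T -> span d setT T.
Proof.
case=> Tsimp Tac Tmax r _ rcard.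
case: (boolP (r \in T)) => rT.
  exists (ind r); split => // s sT; rewrite ffunE; case: eqP => // E.
  by move: sT; rewrite E rT.
apply: NNPP => Hne.
apply: (Tmax r _ rT); first by rewrite /is_simplex rcard.
move=> c csupp cbd.
case: (c r =P 0) => [cr0|crn].
  apply: Tac => // s' s'T; case: (s' =P r) => [->//|ne]; apply: csupp.
  by rewrite !inE negb_or s'T andbT; apply/eqP.
exfalso; apply: Hne.
exists [ffun s => if s == r then 0 else - (c r)^-1 * c s]; split.
  move=> s sT; rewrite ffunE; case: eqP => // /eqP ne.
  by rewrite (csupp s) ?mulr0 // !inE negb_or ne sT.
move=> t; case: (boolP (#|t| == d)) => [/eqP td|td]; last by rewrite !bnd_size.
rewrite !(bnd_bd _ td).
have := cbd t; rewrite (bnd_bd _ td) => H0.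
have E : forall s, [ffun s => if s == r then 0 else - (c r)^-1 * c s] s
                   = - (c r)^-1 * c s + ind r s.
  move=> s; rewrite !ffunE; case: eqP => [->|_]; last by rewrite addr0.
  by rewrite mulNr mulVf ?addNr //; apply/eqP.
under eq_bigr do rewrite E mulrDr mulrCA.
by rewrite big_split /= -mulr_sumr H0 mulr0 add0r.
Qed.

Definition lk (x : 'I_n) (T : {set {set 'I_n}}) : {set {set 'I_n}} :=
  [set s :\ x | s in [set s in T | x \in s]].

Lemma lk_simps k V T x : simps k.+1 V T -> simps k (V :\ x) (lk x T).
Proof.
move=> sT s /imsetP[s']; rewrite inE => /andP[s'T xs'] ->.
have [sub card] := sT _ s'T; split; first exact: setSD.
by have := cardsD1 x s'; rewrite xs' card add1n => -[].
Qed.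

Lemma link_sum (g : {set 'I_n} -> F) (x : 'I_n) (t : {set 'I_n}) : x \notin t ->
  \sum_(v | v \notin t) fs (v |: t) v *
      (if x \in v |: t then 0 else fs (x |: (v |: t)) x * g (x |: (v |: t)))
  = - fs (x |: t) x * \sum_(v | v \notin x |: t) fs (v |: (x |: t)) v * g (v |: (x |: t)).
Proof.
move=> xt; rewrite (bigD1 x) //= setU11 mulr0 add0r mulr_sumr.
apply: eq_big => [v|v /andP[vt vx]]; first by rewrite !inE negb_or andbC.
have xv : x != v by rewrite eq_sym.
rewrite !inE (negbTE xv) (negbTE xt) /= mulrA fs_dd // setUCA.
by rewrite mulNr mulNr mulrA [fs _ v * _]mulrC.
Qed.

Lemma span_link k V T x : span (k.+1) V T -> x \in V -> span k (V :\ x) (lk x T).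
Proof.
move=> sp xV r rsub rcard.
have xr : x \notin r by apply/negP => /(subsetP rsub); rewrite !inE eqxx.
have xrV : x |: r \subset V.
  apply/subsetP => z; rewrite !inE => /orP[/eqP->//|/(subsetP rsub)].
  by rewrite !inE => /andP[_ ->].
have xrc : #|x |: r| = k.+2 by rewrite cardsU1 xr rcard.
have [c [csupp cbd]] := sp (x |: r) xrV xrc.
exists [ffun m : {set 'I_n} => if x \in m then 0 else fs (x |: r) x * (fs (x |: m) x * c (x |: m))].
split.
  move=> m mT; rewrite ffunE; case: ifPn => // xm.
  case: (c (x |: m) =P 0) => [->|cne]; first by rewrite !mulr0.
  exfalso; move: mT; apply/negP/negPn.
  apply/imsetP; exists (x |: m); last by rewrite setU1K.
  rewrite inE setU11 andbT; apply: contraT => nT; by move: cne; rewrite csupp.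
move=> t; case: (boolP (#|t| == k)) => [/eqP tk|tk]; last by rewrite !bnd_size.
rewrite !(bnd_bd _ tk).
case: (boolP (x \in t)) => xt.
  transitivity (0 : F); [apply: big1 => v _ | symmetry; apply: big1 => v _];
    rewrite ffunE.
    by rewrite inE xt orbT mulr0.
  case: eqP => [E|]; last by rewrite mulr0.
  by move: xr; rewrite -E inE xt orbT.
have tk1 : #|x |: t| = k.+1 by rewrite cardsU1 xt tk.
have := cbd (x |: t); rewrite !(bnd_bd _ tk1) => key.
transitivity (fs (x |: r) x * (- fs (x |: t) x *
   \sum_(v | v \notin x |: t) fs (v |: (x |: t)) v * c (v |: (x |: t)))).
  rewrite -link_sum // mulr_sumr; apply: eq_bigr => v _; rewrite ffunE.
  by case: ifP => _; rewrite ?mulr0 // mulrCA.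
rewrite key -link_sum // mulr_sumr; apply: eq_bigr => v vt; rewrite !ffunE.
case: ifPn => xvt.
  rewrite !mulr0; case: eqP => [E|]; last by rewrite mulr0.
  by move: xr; rewrite -E xvt.
have inj : (x |: (v |: t) == x |: r) = (v |: t == r).
  by apply/eqP/eqP => [E|->//]; rewrite -(setU1K xvt) -(setU1K xr) E.
rewrite inj; case: eqP => [E|_]; last by rewrite !mulr0.
by rewrite E !mulr1 mulrCA fs_sq mulr1.
Qed.

Lemma ex_sub (A : {set 'I_n}) k : (k <= #|A|)%N -> exists B : {set 'I_n}, B \subset A /\ #|B| = k.
Proof.
elim: k => [|k IH] kA; first by exists set0; rewrite sub0set cards0.
have [B [BA Bk]] := IH (ltnW kA).
have : (0 < #|A :\: B|)%N by rewrite cardsD (setIidPr BA) subn_gt0 Bk.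
case/card_gt0P => a; rewrite inE => /andP[aB aA].
by exists (a |: B); split; [rewrite subUset sub1set aA BA | rewrite cardsU1 aB Bk].
Qed.

Lemma span_nonempty k V T : span k V T -> (k < #|V|)%N -> exists s, s \in T.
Proof.
move=> sp kV; have [r [rV rk]] := ex_sub kV.
have [c [csupp cbd]] := sp r rV rk.
have : (0 < #|r|)%N by rewrite rk.
case/card_gt0P => v vr.
case: (set_0Vmem T) => [T0|[s sT]]; last by exists s.
exfalso.
have tk : #|r :\ v| = k by have := cardsD1 v r; rewrite vr rk add1n => -[].
have := cbd (r :\ v); rewrite !(bnd_bd _ tk).
rewrite big1 => [|w _]; last by rewrite csupp ?mulr0 // T0 inE.
rewrite (bigD1 v) /=; last by rewrite setD11.
rewrite setD1K // !ffunE eqxx mulr1 big1 ?addr0 => [|w /andP[wt wv]]; last first.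
  rewrite ffunE; case: eqP => [E|]; last by rewrite mulr0.
  by move: wt; rewrite !inE negb_and negbK (negbTE wv) /= -E setU11.
by move/eqP; rewrite eq_sym (negbTE (fs_neq0 _ _)).
Qed.

Lemma span_size k V T : simps k V T -> span k V T -> (k.+2 <= #|V|)%N -> (k < #|T|)%N.
Proof.
elim: k V T => [|k IH] V T sT sp kV.
  have [s sT'] := span_nonempty sp (ltnW kV).
  by apply/card_gt0P; exists s.
have [s0 s0T] := span_nonempty sp (ltnW kV).
have [s0V s0c] := sT _ s0T.
have : (0 < #|V :\: s0|)%N by rewrite cardsD (setIidPr s0V) s0c subn_gt0.
case/card_gt0P => z; rewrite inE => /andP[zs0 zV].
have Vz : (k.+1 < #|V :\ z|)%N.
  by have := cardsD1 z V; rewrite zV add1n => E; move: kV; rewrite E ltnS.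
have H := IH (V :\ z) (lk z T) (lk_simps (x:=z) sT) (span_link sp zV) Vz.
apply: leq_ltn_trans H _.
apply: leq_ltn_trans (leq_imset_card _ _) _; apply: proper_card.
apply/properP; split; first by apply/subsetP => s; rewrite inE => /andP[].
by exists s0 => //; rewrite inE s0T.
Qed.


Lemma bnd_adj k (c : chain) (phi : {set 'I_n} -> F) :
  \sum_t phi t * bnd k c t =
  \sum_(s | is_simplex n k s) c s * \sum_(v in s) fs s v * phi (s :\ v).
Proof.
rewrite /boundary.
under eq_bigr do rewrite mulr_sumr.
rewrite exchange_big /=; apply: eq_bigr => s _.
rewrite mulr_sumr.
under eq_bigr do rewrite mulr_sumr.
rewrite (exchange_big_dep (fun v => v \in s)) /=; last by move=> t v _ /andP[].
apply: eq_bigr => v vs.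
rewrite (big_pred1 (s :\ v)) => [|t]; last by rewrite vs eq_sym.
by ring.
Qed.

Lemma fs1 (q v : 'I_n) : fs [set q] v = if (val q < val v)%N then -1 else 1.
Proof.
rewrite /face_sign; case P: (val q < val v)%N.
- have -> : [set x in [set q] | (val x < val v)%N] = [set q].
    by apply/setP => z; rewrite !inE; case: (z =P q) => [->|]; rewrite ?P.
  by rewrite cards1 expr1.
- have -> : [set x in [set q] | (val x < val v)%N] = set0.
    by apply/setP => z; rewrite !inE; case: (z =P q) => [->|]; rewrite ?P.
  by rewrite cards0 expr0.
Qed.

Lemma fs2 (p q : 'I_n) : p != q -> fs [set p; q] p + fs [set p; q] q = 0.
Proof.
move=> pq; have pq' : p \notin [set q] by rewrite inE.
rewrite !fs_ins // !fs1 !ltnn.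
have : val p != val q by [].
by case: (ltngtP (val p) (val q)) => // _ _; rewrite ?mulr1 ?mul1r ?addNr ?addrN.
Qed.

Lemma dphi2 (p q : 'I_n) (g : {set 'I_n} -> F) : p != q ->
  \sum_(v in [set p; q]) fs [set p; q] v * g ([set p; q] :\ v) =
  fs [set p; q] p * g [set q] + fs [set p; q] q * g [set p].
Proof.
move=> pq; have pq' : p \notin [set q] by rewrite inE.
rewrite big_setU1 //= big_set1 setU1K //.
have -> : [set p; q] :\ q = [set p] by rewrite setUC setU1K // inE eq_sym.
by [].
Qed.

Definition Rrel d (R : {set {set 'I_n}}) : rel {set 'I_n} :=
  fun a b => [&& a \in R, b \in R & facet_adj n d a b].

Lemma adj_common1 (R : {set {set 'I_n}}) a b x :
  a \in R -> b \in R -> x \in a -> x \in b -> connect (Rrel 1 R) a b.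
Proof.
move=> aR bR xa xb; case: (a =P b) => [->|ne]; first exact: connect0.
apply: connect1; rewrite /Rrel aR bR /facet_adj /=; apply/andP; split; first by apply/eqP.
by apply/existsP; exists [set x]; rewrite cards1 !sub1set xa xb.
Qed.

Lemma Q1 V T : simps 1 V T -> span 1 V T -> (3 <= #|V|)%N ->
  connected_on _ (facet_adj n 1) T.
Proof.
move=> sT sp V3; split.
  have [s sT'] := span_nonempty sp (ltnW V3).
  by apply/set0Pn; exists s.
move=> s1 s2 s1T s2T; rewrite -/(Rrel 1 T s1 s2).
case: (boolP (connect (Rrel 1 T) s1 s2)) => // nc; exfalso.
pose C := [set a | [exists w in T, (a \in w) && connect (Rrel 1 T) s1 w]].
have Ccl : forall w a b, w \in T -> a \in w -> b \in w -> a \in C -> b \in C.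
  move=> w a b wT aw bw; rewrite !inE => /existsP[w' /andP[w'T /andP[aw' cw']]].
  apply/existsP; exists w; rewrite wT bw /=; apply: connect_trans cw' _.
  exact: adj_common1 aw' aw.
have s1C : forall a, a \in s1 -> a \in C.
  by move=> a a1; rewrite inE; apply/existsP; exists s1; rewrite s1T a1 connect0.
have s2C : forall a, a \in s2 -> a \notin C.
  move=> a a2; apply/negP; rewrite inE => /existsP[w /andP[wT /andP[aw cw]]].
  by apply: (negP nc); apply: connect_trans cw _; exact: adj_common1 aw a2.
have [s1V s1c] := sT _ s1T; have [s2V s2c] := sT _ s2T.
have : (0 < #|s1|)%N by rewrite s1c. case/card_gt0P => u us1.
have : (0 < #|s2|)%N by rewrite s2c. case/card_gt0P => v vs2.
have uC := s1C _ us1; have vC := s2C _ vs2.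
have uv : u != v by apply: contraNneq vC => <-.
have rV : [set u; v] \subset V.
  by rewrite subUset !sub1set (subsetP s1V _ us1) (subsetP s2V _ vs2).
have rc : #|[set u; v]| = 2 by rewrite cards2 uv.
have [c [csupp cbd]] := sp _ rV rc.
pose phi := fun t : {set 'I_n} => ((t \subset C)%:R : F).
have E : \sum_t phi t * bnd 1 c t = \sum_t phi t * bnd 1 (ind [set u; v]) t.
  by apply: eq_bigr => t _; rewrite cbd.
move: E; rewrite !bnd_adj.
rewrite big1 => [|s _]; last first.
  case: (boolP (s \in T)) => sT'; last by rewrite csupp ?mul0r.
  have [_ /eqP /cards2P [p [q [pq sE]]]] := sT _ sT'.
  rewrite sE in sT' *.
  rewrite dphi2 // /phi !sub1set.
  have pin : p \in [set p; q] by rewrite !inE eqxx.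
  have qin : q \in [set p; q] by rewrite !inE eqxx orbT.
  case: (boolP (p \in C)) => pC.
    have qC : q \in C := Ccl _ _ _ sT' pin qin pC.
    by rewrite qC !mulr1 fs2 ?mulr0.
  have qC : q \notin C by apply: contraNN pC; apply: (Ccl _ _ _ sT' qin pin).
  by rewrite (negbTE qC) !mulr0 addr0 mulr0.
rewrite (bigD1 [set u; v]) /=; last by rewrite /is_simplex rc.
rewrite [X in _ + X]big1 => [|s /andP[_ ns]]; last by rewrite ffunE (negbTE ns) mul0r.
rewrite ffunE eqxx mul1r addr0 dphi2 // /phi !sub1set (negbTE vC) uC mulr0 add0r mulr1.
by move/eqP; rewrite eq_sym (negbTE (fs_neq0 _ _)).
Qed.


Lemma connect_map (T1 T2 : finType) (e1 : rel T1) (e2 : rel T2) (f : T1 -> T2) :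
  (forall u v, e1 u v -> e2 (f u) (f v)) ->
  forall a b, connect e1 a b -> connect e2 (f a) (f b).
Proof.
move=> H a b /connectP[p pa ->]; apply/connectP; exists (map f p); last by rewrite last_map.
by elim: p a pa => //= c p IHp a /andP[ac pc]; rewrite H // IHp.
Qed.

Definition Qd d := forall (V : {set 'I_n}) (T S : {set {set 'I_n}}), simps d V T -> span d V T -> (d.+2 <= #|V|)%N ->
  S \subset T -> ((#|S| < d)%N \/ S = set0) ->
  connected_on _ (facet_adj n d) (T :\: S).

Lemma Qd1 : Qd 1.
Proof.
move=> V T S sT sp V3 _ Sc.
have -> : S = set0 by case: Sc => // /ltnSE; rewrite leqn0 => /eqP /cards0_eq.
by rewrite setD0; exact: Q1 sp V3.
Qed.

Lemma cardSx_sum (S : {set {set 'I_n}}) (x : 'I_n) :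
  #|[set s in S | x \in s]| = (\sum_(s in S) (x \in s))%N.
Proof.
rewrite -sum1_card big_mkcond /= [RHS]big_mkcond /=; apply: eq_bigr => s _.
by rewrite inE; case: (s \in S); case: (x \in s).
Qed.

Lemma Qstep d : Qd d.+1 -> Qd d.+2.
Proof.
move=> IH V T S sT sp V4 ST Sc.
have Tsz := span_size sT sp V4.
have Ssz : (#|S| < d.+2)%N.
  by case: Sc => // ->; rewrite cards0.
pose R := T :\: S.
have RT : forall w, w \in R -> w \in T by move=> w; rewrite inE => /andP[].
have RS : forall w, w \in R -> w \notin S by move=> w; rewrite inE => /andP[].
pose Sx x := [set s in S | x \in s].
pose good x := ((#|Sx x| < d.+1)%N || (Sx x == set0)).
have C1 : forall x, good x -> forall a b, a \in R -> b \in R -> x \in a -> x \in b ->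
    connect (Rrel d.+2 R) a b.
  move=> x gx a b aR bR xa xb.
  have xV : x \in V by have [aV _] := sT _ (RT _ aR); exact: (subsetP aV).
  pose L := lk x T.
  pose S' := [set s :\ x | s in Sx x].
  have S'L : S' \subset L.
    apply: imsetS; apply/subsetP => s; rewrite !inE => /andP[sS ->].
    by rewrite (subsetP ST _ sS).
  have S'c : (#|S'| < d.+1)%N \/ S' = set0.
    case/orP: gx => [gx|/eqP gx]; last by right; rewrite /S' gx imset0.
    by left; apply: leq_ltn_trans (leq_imset_card _ _) gx.
  have Vx : (d.+3 <= #|V :\ x|)%N.
    by have := cardsD1 x V; rewrite xV add1n => E; move: V4; rewrite E ltnS.
  have [_ CL] := IH (V :\ x) L S' (lk_simps (x:=x) sT) (span_link sp xV) Vx S'L S'c.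
  have lift : forall u, u \in L :\: S' ->
      [/\ x \notin u, x |: u \in T & x |: u \notin S].
    move=> u; rewrite inE => /andP[uS' /imsetP[s]]; rewrite inE => /andP[sT' xs] us.
    have xu : x \notin u by rewrite us setD11.
    have E : x |: u = s by rewrite us setD1K.
    split => //; first by rewrite E.
    apply/negP => sS; move: uS'; apply/negP/negPn; apply/imsetP; exists (x |: u).
      by rewrite inE sS setU11.
    by rewrite setU1K.
  have memL : forall w, w \in R -> x \in w -> w :\ x \in L :\: S'.
    move=> w wR xw; rewrite inE; apply/andP; split.
      apply/negP => /imsetP[s]; rewrite inE => /andP[sS xs] E.
      have : w = s by rewrite -(setD1K xw) -(setD1K xs) E.
      by move=> ws; move: (RS _ wR); rewrite ws sS.
    by apply/imsetP; exists w => //; rewrite inE (RT _ wR) xw.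
  have := CL _ _ (memL _ aR xa) (memL _ bR xb).
  rewrite -/(Rrel d.+1 (L :\: S') _ _).
  move/(connect_map (f := fun m => x |: m) (e2 := Rrel d.+2 R)).
  rewrite !setD1K //; apply.
  move=> u v /and3P[uL vL /andP[uv /existsP[r /and3P[rc ru rv]]]].
  have [xu uT uS] := lift _ uL; have [xv vT vS] := lift _ vL.
  rewrite /Rrel !inE uT vT uS vS /= /facet_adj; apply/andP; split.
    apply: contraNneq uv => E.
    by rewrite -(setU1K xu) -(setU1K xv) E.
  apply/existsP; exists (x |: r).
  have xr : x \notin r by apply: contraNN xu; exact: (subsetP ru).
  by rewrite cardsU1 xr (eqP rc) eqxx !setUS.
have C2 : forall x y, good x -> x != y -> x \in V -> y \in V ->
    exists w, [/\ w \in R, x \in w & y \in w].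
  move=> x y gx xy xV yV.
  case: (boolP [exists w, [&& w \in R, x \in w & y \in w]]) => [/existsP[w /and3P[]]|ne].
    by move=> *; exists w.
  exfalso.
  have yVx : y \in V :\ x by rewrite !inE eq_sym xy.
  have sp2 := span_link (span_link sp xV) yVx.
  have sT2 := lk_simps (x:=y) (lk_simps (x:=x) sT).
  have V2 : (d.+2 <= #|V :\ x :\ y|)%N.
    have := cardsD1 x V; rewrite xV add1n => E1.
    have := cardsD1 y (V :\ x); rewrite yVx add1n => E2.
    by move: V4; rewrite E1 E2 !ltnS.
  have L2sz := span_size sT2 sp2 V2.
  pose Txy := [set w in T | (x \in w) && (y \in w)].
  have L2Txy : (#|lk y (lk x T)| <= #|Txy|)%N.
    apply: leq_trans (leq_imset_card _ _) _.
    apply: leq_trans _ (leq_imset_card (fun w => w :\ x) Txy).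
    apply: subset_leq_card; apply/subsetP => m; rewrite inE => /andP[/imsetP[s]].
    rewrite inE => /andP[sT' xs] -> ys.
    apply/imsetP; exists s => //; rewrite inE sT' xs /=.
    by move: ys; rewrite inE => /andP[].
  have TxyS : Txy \subset Sx x.
    apply/subsetP => w; rewrite !inE => /andP[wT /andP[xw yw]].
    rewrite xw andbT; apply: contraNT ne => wS.
    by apply/existsP; exists w; rewrite !inE wS wT xw yw.
  have := subset_leq_card TxyS.
  case/orP: gx => [gx|/eqP gx]; last first.
    by rewrite gx cards0 leqn0 => /eqP E; move: L2Txy; rewrite E leqn0 => /eqP E'; move: L2sz; rewrite E'.
  move=> H; move: (leq_trans L2Txy H) => H'; move: (leq_ltn_trans H' gx).
  by move: L2sz; rewrite !ltnS => A B; move: (leq_trans A B); rewrite ltnn.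
have C3 : forall s, s \in R -> exists x, x \in s /\ good x.
  move=> s sR; have [sV sc] := sT _ (RT _ sR).
  case: (boolP [exists x, (x \in s) && good x]) => [/existsP[x /andP[xs gx]]|ne].
    by exists x.
  exfalso.
  have bad : forall x, x \in s -> (d.+1 <= #|Sx x|)%N.
    move=> x xs; apply: contraNT ne; rewrite -ltnNge => lt.
    by apply/existsP; exists x; rewrite xs /good lt.
  have lo : (#|s| * d.+1 <= \sum_(x in s) #|Sx x|)%N.
    by rewrite -sum_nat_const; apply: leq_sum.
  have eqs : (\sum_(x in s) #|Sx x| = \sum_(w in S) #|s :&: w|)%N.
    under eq_bigr do rewrite cardSx_sum.
    rewrite exchange_big /=; apply: eq_bigr => w _.
    rewrite -sum1_card big_mkcond /= [RHS]big_mkcond /=; apply: eq_bigr => x _.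
    by rewrite !inE; case: (x \in s); case: (x \in w).
  have hi : (\sum_(w in S) #|s :&: w| <= #|S| * d.+2)%N.
    rewrite -sum_nat_const; apply: leq_sum => w wS.
    have [wV wc] := sT _ (subsetP ST _ wS).
    rewrite leqNgt; apply/negP => big.
    have E1 : s :&: w == s by rewrite eqEcard subsetIl sc.
    have E2 : s == w.
      by rewrite eqEcard wc sc leqnn andbT; apply/setIidPl/eqP.
    by move: (RS _ sR); rewrite (eqP E2) wS.
  move: lo; rewrite eqs sc => lo.
  have := leq_trans lo hi.
  move: Ssz; set m := #|S|; move=> Ssz H; nia.
split.
  apply/set0Pn; have : (0 < #|T :\: S|)%N.
    by rewrite cardsD (setIidPr ST) subn_gt0; lia.
  by case/card_gt0P => w wR; exists w.
move=> a b aR bR; rewrite -/(Rrel d.+2 R a b).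
have [x [xa gx]] := C3 _ aR; have [y [yb gy]] := C3 _ bR.
case: (x =P y) => [E|/eqP xy].
  by rewrite -E in yb; apply: (C1 x gx).
have [aV _] := sT _ (RT _ aR); have [bV _] := sT _ (RT _ bR).
have [w [wR xw yw]] := C2 x y gx xy (subsetP aV _ xa) (subsetP bV _ yb).
apply: connect_trans (C1 x gx _ _ aR wR xa xw) (C1 y gy _ _ wR bR yw yb).
Qed.

End Proofs.

Lemma Qall (F : fieldType) n d : (1 <= d)%N -> Qd F n d.
Proof.
case: d => // d _; elim: d => [|d IH]; [exact: Qd1 | exact: Qstep].
Qed.

Theorem theorem4p4 (F : fieldType) (d n : nat) (T : {set {set 'I_n}}) :
  (1 <= d)%N -> (d + 2 <= n)%N -> hypertree F n d T ->
  k_connected _ (facet_adj n d) T d.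
Proof.
move=> d1 dn hT S ST Sd.
have sT : simps d setT T.
  case: hT => Tsimp _ _ s sT'; split; first exact: subsetT.
  by apply/eqP; exact: Tsimp.
have Vn : (d.+2 <= #|[set: 'I_n]|)%N by rewrite cardsT card_ord; lia.
exact: (@Qall F n d d1 setT T S sT (hyper_span hT) Vn ST (or_introl Sd)).
Qed.
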